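(* In the discrete scheme described in the context, let $M'=\max_j|\theta^n_j|+\max_j|q^n_j|$. Fix $j_0\in\{1,\dots,n\}$ and integers $0\le k<l\le T/\delta t$, and let $$J_{k,l}=\{j\in\{1,\dots,n\}:\alpha_{k\delta t}(j)<\alpha_{k\delta t}(j_0),\ \alpha_{l\delta t}(j)>\alpha_{l\delta t}(j_0)\}.$$ There exists a constant $C_4'>0$ depending only on $M'$, $T$ and $Q^{sat}$ such that if $n\delta t<\frac1{C_4'}$, then $\#J_{k,l}\le2(l-k)$.
   Context: $Q^{sat}:\mathbb{R}^3\to\mathbb{R}$ is smooth with $\partial_\theta Q^{sat}>0$, $\partial_zQ^{sat}<0$. $\Theta(w,z,t)$ is the solution $\theta$ of $\theta+Q^{sat}(\theta,z,t)=w$ (assumed well defined), with $\partial_w\Theta>0$, $\partial_z\Theta>0$. Discrete scheme. Fix $T>0$, $n\ge1$, $\delta t>0$, $z_i=i/n$. There are $n$ parcels $j=1,\dots,n$; initially parcel $j$ is at position $j$ with value $\theta^n_j$, where $\theta^n_1\le\dots\le\theta^n_n$ and $q^n_j\le Q^{sat}(\theta^n_j,z_j,0)$; parcel $j$ carries the fixed number $\theta^M_j=\theta^n_j+q^n_j$. One time step from $k\delta t$ to $(k+1)\delta t$, with $\tau=(k+1)\delta t$: positions $m=n,\dots,1$ are processed in this order. At stage $m$, with current configuration (parcel $p(i)$ at position $i$ with value $\vartheta_i$), position $i$ is wet if $\vartheta_i<\Theta(\theta^M_{p(i)},z_i,\tau)$; a wet position $i_0\le m$ is eligible if for every $i$ with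 $i_0<i\le m$, either $i$ is not wet and $\vartheta_i<\Theta(\theta^M_{p(i_0)},z_i,\tau)$, or $i$ is wet and $\theta^M_{p(i_0)}>\theta^M_{p(i)}$. If some position is eligible, let $i_*$ be the eligible position whose parcel has the largest $\theta^M$ (largest position in case of ties); that parcel moves to position $m$ with new value $\Theta(\theta^M_{p(i_* )},z_m,\tau)$, the parcels at $i_*+1,\dots,m$ move down one position keeping their values, others unchanged; otherwise nothing changes. After stage $1$ one has the configuration at time $(k+1)\delta t$. $\alpha_{k\delta t}(j)$ denotes the position of parcel $j$ after $k$ time steps ($\alpha_0=id$). *)

(* Defs.v *)
From Stdlib Require Import Reals Lra Lia List Arith Bool.
From Coquelicot Require Import Coquelicot.
Open Scope R_scope.

Definition cont3 (f : R -> R -> R -> R) : Prop :=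
  forall x y z : R,
    continuous (fun p : R * R * R => f (fst (fst p)) (snd (fst p)) (snd p)) (x, y, z).

Fixpoint Ck (k : nat) (f : R -> R -> R -> R) : Prop :=
  match k with
  | O => cont3 f
  | S k' =>
      cont3 f /\
      exists d1 d2 d3 : R -> R -> R -> R,
        (forall x y z, is_derive (fun s => f s y z) x (d1 x y z)) /\
        (forall x y z, is_derive (fun s => f x s z) y (d2 x y z)) /\
        (forall x y z, is_derive (fun s => f x y s) z (d3 x y z)) /\
        Ck k' d1 /\ Ck k' d2 /\ Ck k' d3
  end.

Definition smooth3 (f : R -> R -> R -> R) : Prop := forall k, Ck k f.

Definition Rltb (x y : R) : bool := if Rlt_dec x y then true else false.
Definition Rleb (x y : R) : bool := if Rle_dec x y then true else false.

(* A configuration: [cp i] is the parcel at position i, [cv i] its value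
   (positions i = 1..n are meaningful). *)
Record config := mkConfig { cp : nat -> nat ; cv : nat -> R }.

Section Scheme.
Variable Theta : R -> R -> R -> R.
Variable n : nat.
Variable thetaM : nat -> R.          (* θ^M_j = θ^n_j + q^n_j, fixed per parcel *)
Variable tau : R.                    (* τ = (k+1) δt *)

Definition zpos (i : nat) : R := INR i / INR n.

Definition wetb (c : config) (i : nat) : bool :=
  Rltb (cv c i) (Theta (thetaM (cp c i)) (zpos i) tau).

Definition elig_condb (c : config) (i0 i : nat) : bool :=
  orb (andb (negb (wetb c i)) (Rltb (cv c i) (Theta (thetaM (cp c i0)) (zpos i) tau)))
      (andb (wetb c i) (Rltb (thetaM (cp c i)) (thetaM (cp c i0)))).

Definition eligibleb (c : config) (m i0 : nat) : bool :=
  andb (wetb c i0) (forallb (elig_condb c i0) (seq (S i0) (m - i0))).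

(* scan positions in increasing order; keep the eligible one with the largest θ^M,
   a later (larger) position winning ties *)
Definition select_best (c : config) (m : nat) : option nat :=
  fold_left
    (fun (best : option nat) (i : nat) =>
       if eligibleb c m i then
         match best with
         | None => Some i
         | Some b => if Rleb (thetaM (cp c b)) (thetaM (cp c i)) then Some i else Some b
         end
       else best)
    (seq 1 m) None.

(* the parcel at i* moves to m (value reset to Θ(θ^M, z_m, τ)); those at i*+1..m move down one *)
Definition move (c : config) (istar m : nat) : config :=
  mkConfig
    (fun i => if orb (i <? istar) (m <? i) then cp c i
              else if i =? m then cp c istar else cp c (S i))
    (fun i => if orb (i <? istar) (m <? i) then cv c i
              else if i =? m then Theta (thetaM (cp c istar)) (zpos m) tau
              else cv c (S i)).

Definition stage (c : config) (m : nat) : config :=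
  match select_best c m with
  | Some istar => move c istar m
  | None => c
  end.

Definition time_step (c : config) : config :=
  fold_left stage (rev (seq 1 n)) c.

End Scheme.

Definition init_config (theta0 : nat -> R) : config := mkConfig (fun i => i) theta0.

Fixpoint config_at (Theta : R -> R -> R -> R) (n : nat) (dt : R)
         (theta0 q0 : nat -> R) (k : nat) : config :=
  match k with
  | O => init_config theta0
  | S k' => time_step Theta n (fun j => theta0 j + q0 j) (INR (S k') * dt)
                      (config_at Theta n dt theta0 q0 k')
  end.

Definition alpha (Theta : R -> R -> R -> R) (n : nat) (dt : R)
           (theta0 q0 : nat -> R) (k j : nat) : nat :=
  match find (fun i => cp (config_at Theta n dt theta0 q0 k) i =? j) (seq 1 n) with
  | Some i => i
  | None => 0%nat
  end.

Definition card_J (Theta : R -> R -> R -> R) (n : nat) (dt : R)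
           (theta0 q0 : nat -> R) (j0 k l : nat) : nat :=
  length (filter (fun j =>
            andb (alpha Theta n dt theta0 q0 k j <? alpha Theta n dt theta0 q0 k j0)
                 (alpha Theta n dt theta0 q0 l j0 <? alpha Theta n dt theta0 q0 l j))
          (seq 1 n)).

Definition maxabs (n : nat) (f : nat -> R) : R :=
  fold_right Rmax 0 (map (fun j => Rabs (f j)) (seq 1 n)).

(* Main.v *)
Require Import Defs.
From Stdlib Require Import Reals Lra Lia List Arith Bool Classical ClassicalEpsilon.
From Coquelicot Require Import Coquelicot.
Open Scope R_scope.

Lemma cont3_epsg (g : R -> R -> R -> R) (e : posreal) : cont3 g ->
  forall x y z, exists d : posreal, forall x' y' z',
    Rabs (x' - x) < d -> Rabs (y' - y) < d -> Rabs (z' - z) < d ->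
    Rabs (g x' y' z' - g x y z) < e.
Proof.
  intros Hc x y z. specialize (Hc x y z).
  apply filterlim_locally with (eps := e) in Hc.
  destruct Hc as [d Hd]. exists d. intros x' y' z' h1 h2 h3.
  specialize (Hd ((x',y'),z')).
  assert (B: ball ((x,y),z) d ((x',y'),z')).
  { split; [split|]; simpl; unfold ball; simpl; unfold AbsRing_ball; simpl;
    unfold abs, minus, plus, opp; simpl; assumption. }
  specialize (Hd B). unfold ball in Hd; simpl in Hd. unfold AbsRing_ball in Hd.
  unfold abs, minus, plus, opp in Hd; simpl in Hd. exact Hd.
Qed.

Lemma cont3_eps (g : R -> R -> R -> R) : cont3 g ->
  forall x y z, exists d : posreal, forall x' y' z',
    Rabs (x' - x) < d -> Rabs (y' - y) < d -> Rabs (z' - z) < d ->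
    Rabs (g x' y' z' - g x y z) < 1.
Proof.
  intros Hc x y z. specialize (Hc x y z).
  apply filterlim_locally with (eps := mkposreal 1 Rlt_0_1) in Hc.
  destruct Hc as [d Hd]. exists d. intros x' y' z' h1 h2 h3.
  specialize (Hd ((x',y'),z')).
  assert (B: ball ((x,y),z) d ((x',y'),z')).
  { split; [split|]; simpl; unfold ball; simpl; unfold AbsRing_ball; simpl;
    unfold abs, minus, plus, opp; simpl; assumption. }
  specialize (Hd B). unfold ball in Hd; simpl in Hd. unfold AbsRing_ball in Hd.
  unfold abs, minus, plus, opp in Hd; simpl in Hd. exact Hd.
Qed.

Lemma cont3_bounded (g : R -> R -> R -> R) : cont3 g ->
  forall a1 b1 a2 b2 a3 b3, exists M, forall x y z,
    a1 <= x <= b1 -> a2 <= y <= b2 -> a3 <= z <= b3 -> Rabs (g x y z) <= M.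
Proof.
  intros Hc a1 b1 a2 b2 a3 b3.
  pose (delta := fun t : Compactness.Tn 3 R =>
       proj1_sig (constructive_indefinite_description _ (cont3_eps g Hc (fst t) (fst (snd t)) (fst (snd (snd t)))))).
  apply NNPP; intro HnG.
  apply (compactness_list 3 (a1,(a2,(a3,tt))) (b1,(b2,(b3,tt))) delta).
  intros [l Hl]. apply HnG.
  exists (fold_right (fun (t : Compactness.Tn 3 R) acc =>
     Rmax (Rabs (g (fst t) (fst (snd t)) (fst (snd (snd t)))) + 1) acc) 0 l).
  intros x y z hx hy hz.
  destruct (Hl (x,(y,(z,tt)))) as [t [Hin [Hb Hcl]]].
  { simpl. tauto. }
  destruct t as [t1 [t2 [t3 []]]].
  simpl in Hcl. destruct Hcl as [c1 [c2 [c3 _]]].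
  unfold delta in c1, c2, c3.
  pose proof (proj2_sig (constructive_indefinite_description _ (cont3_eps g Hc t1 t2 t3))) as Hd.
  simpl in c1, c2, c3, Hd.
  specialize (Hd x y z c1 c2 c3).
  assert (Rabs (g x y z) <= Rabs (g t1 t2 t3) + 1).
  { pose proof (Rabs_triang_inv (g x y z) (g t1 t2 t3)). lra. }
  clear -H Hin. induction l as [|u l IH]; simpl in Hin. contradiction.
  destruct Hin as [Heq|Hin].
  - subst u. simpl. eapply Rle_trans; [exact H|]. apply Rmax_l.
  - simpl. eapply Rle_trans; [apply IH; exact Hin|]. apply Rmax_r.
Qed.

Lemma cont3_posbound (g : R -> R -> R -> R) : cont3 g -> (forall x y z, 0 < g x y z) ->
  forall a1 b1 a2 b2 a3 b3, exists k, 0 < k /\ forall x y z,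
    a1 <= x <= b1 -> a2 <= y <= b2 -> a3 <= z <= b3 -> k <= g x y z.
Proof.
  intros Hc Hpos a1 b1 a2 b2 a3 b3.
  pose (ep := fun x y z => mkposreal (g x y z / 2) ltac:(specialize (Hpos x y z); lra)).
  pose (delta := fun t : Compactness.Tn 3 R =>
       proj1_sig (constructive_indefinite_description _
         (cont3_epsg g (ep (fst t) (fst (snd t)) (fst (snd (snd t)))) Hc
            (fst t) (fst (snd t)) (fst (snd (snd t)))))).
  apply NNPP; intro HnG.
  apply (compactness_list 3 (a1,(a2,(a3,tt))) (b1,(b2,(b3,tt))) delta).
  intros [l Hl]. apply HnG.
  exists (fold_right (fun (t : Compactness.Tn 3 R) acc =>
     Rmin (g (fst t) (fst (snd t)) (fst (snd (snd t))) / 2) acc) 1 l).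
  split.
  { clear -Hpos. induction l as [|u l IH]; simpl. lra.
    apply Rmin_glb_lt; auto. specialize (Hpos (fst u) (fst (snd u)) (fst (snd (snd u)))). lra. }
  intros x y z hx hy hz.
  destruct (Hl (x,(y,(z,tt)))) as [t [Hin [Hb Hcl]]].
  { simpl. tauto. }
  destruct t as [t1 [t2 [t3 []]]].
  simpl in Hcl. destruct Hcl as [c1 [c2 [c3 _]]].
  unfold delta in c1, c2, c3.
  pose proof (proj2_sig (constructive_indefinite_description _
    (cont3_epsg g (ep t1 t2 t3) Hc t1 t2 t3))) as Hd.
  simpl in c1, c2, c3, Hd.
  specialize (Hd x y z c1 c2 c3).
  assert (H: g t1 t2 t3 / 2 <= g x y z).
  { apply Rabs_def2 in Hd. lra. }
  clear -H Hin. induction l as [|u l IH]; simpl in Hin. contradiction.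
  destruct Hin as [Heq|Hin].
  - subst u. simpl. eapply Rle_trans; [|exact H]. apply Rmin_l.
  - simpl. eapply Rle_trans; [|apply IH; exact Hin]. apply Rmin_r.
Qed.

Lemma Rabs_le_inv a b : Rabs a <= b -> -b <= a <= b.
Proof. unfold Rabs; destruct Rcase_abs; lra. Qed.

Section QS.
Variables Q Th : R -> R -> R -> R.
Hypothesis HQ : smooth3 Q.
Hypothesis HQth : forall th z t, Derive (fun s => Q s z t) th > 0.
Hypothesis HQz : forall th z t, Derive (fun s => Q th s t) z < 0.
Hypothesis HTh : forall w z t, Th w z t + Q (Th w z t) z t = w.

Lemma Qder : exists d1 d2 d3 : R -> R -> R -> R,
   (forall x y z, is_derive (fun s => Q s y z) x (d1 x y z)) /\
   (forall x y z, is_derive (fun s => Q x s z) y (d2 x y z)) /\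
   (forall x y z, is_derive (fun s => Q x y s) z (d3 x y z)) /\
   cont3 d2 /\ cont3 d3 /\ cont3 Q /\
   (forall x y z, 0 < d1 x y z) /\ (forall x y z, d2 x y z < 0).
Proof.
  destruct (HQ 1%nat) as [HcQ [d1 [d2 [d3 [h1 [h2 [h3 [c1 [c2 c3]]]]]]]]].
  exists d1, d2, d3. refine (conj h1 (conj h2 (conj h3 (conj c2 (conj c3 (conj HcQ (conj _ _))))))).
  - intros x y z. rewrite <- (is_derive_unique _ _ _ (h1 x y z)). apply HQth.
  - intros x y z. rewrite <- (is_derive_unique _ _ _ (h2 x y z)). apply HQz.
Qed.

Lemma Q_inc : forall a b z t, a < b -> Q a z t < Q b z t.
Proof.
  intros a b z t Hab. destruct Qder as [d1 [d2 [d3 [h1 [h2 [h3 [_ [_ [_ [p1 p2]]]]]]]]]].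
  destruct (MVT_cor2 (fun s => Q s z t) (fun s => d1 s z t) a b Hab) as [c [Hc _]].
  { intros c _. apply is_derive_Reals. apply h1. }
  specialize (p1 c z t). nra.
Qed.

Lemma Q_dec : forall th z1 z2 t, z1 < z2 -> Q th z2 t < Q th z1 t.
Proof.
  intros th a b t Hab. destruct Qder as [d1 [d2 [d3 [h1 [h2 [h3 [_ [_ [_ [p1 p2]]]]]]]]]].
  destruct (MVT_cor2 (fun s => Q th s t) (fun s => d2 th s t) a b Hab) as [c [Hc _]].
  { intros c _. apply is_derive_Reals. apply h2. }
  specialize (p2 th c t). nra.
Qed.

Lemma f_strict : forall a b z t, a < b -> a + Q a z t < b + Q b z t.
Proof. intros. pose proof (Q_inc a b z t H). lra. Qed.

Lemma f_le : forall a b z t, a <= b -> a + Q a z t <= b + Q b z t.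
Proof. intros a b z t [H|H]. left; apply f_strict; auto. subst; lra. Qed.

Lemma Th_lt : forall w th z t, w < th + Q th z t -> Th w z t < th.
Proof.
  intros w th z t H. destruct (Rlt_or_le (Th w z t) th) as [h|h]; auto.
  pose proof (f_le th (Th w z t) z t h). rewrite HTh in H0. lra.
Qed.

Lemma Th_le : forall w th z t, w <= th + Q th z t -> Th w z t <= th.
Proof.
  intros w th z t H. destruct (Rle_or_lt (Th w z t) th) as [h|h]; auto.
  pose proof (f_strict th (Th w z t) z t h). rewrite HTh in H0. lra.
Qed.

Lemma Th_mono_w : forall w1 w2 z t, w1 <= w2 -> Th w1 z t <= Th w2 z t.
Proof.
  intros. apply Th_le. rewrite HTh. auto.
Qed.

Lemma Th_mono_z : forall w z1 z2 t, z1 <= z2 -> Th w z1 t <= Th w z2 t.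
Proof.
  intros w z1 z2 t [H|H]; [|subst; lra].
  apply Th_le. pose proof (HTh w z2 t). pose proof (Q_dec (Th w z2 t) z1 z2 t H). lra.
Qed.

Lemma zpos_S n i : (1 <= n)%nat -> zpos n (S i) = zpos n i + / INR n.
Proof. intros Hn. unfold zpos. rewrite S_INR. field. apply not_0_INR. lia. Qed.

Lemma zpos_bounds n i : (1 <= n)%nat -> (i <= 2 * n)%nat -> 0 <= zpos n i <= 2.
Proof.
  intros Hn Hi. unfold zpos. assert (0 < INR n) by (apply lt_0_INR; lia).
  split. apply Rmult_le_pos. apply pos_INR. left; apply Rinv_0_lt_compat; auto.
  apply Rmult_le_reg_r with (INR n); auto. unfold Rdiv. rewrite Rmult_assoc, Rinv_l by lra.
  rewrite Rmult_1_r. replace 2 with (INR 2) by (simpl; lra). rewrite <- mult_INR. apply le_INR. lia.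
Qed.

Lemma margin_exists : forall Mp T, T > 0 -> exists C4, C4 > 0 /\
  forall (n : nat) dt, (1 <= n)%nat -> dt > 0 -> INR n * dt < 1 / C4 ->
  forall w i t, Rabs w <= Mp -> (1 <= i <= n)%nat -> 0 <= t -> t + dt <= T ->
  Th w (zpos n i) (t + dt) < Th w (zpos n (S i)) t.
Proof.
  intros Mp T HT.
  destruct Qder as [d1 [d2 [d3 [h1 [h2 [h3 [cd2 [cd3 [cQ [p1 p2]]]]]]]]]].
  destruct (cont3_bounded Q cQ 0 0 0 2 0 T) as [M0 HM0].
  set (Bd := Mp + M0).
  assert (HB: forall w z t, Rabs w <= Mp -> 0 <= z <= 2 -> 0 <= t <= T -> Rabs (Th w z t) <= Bd).
  { intros w z t hw hz ht. pose proof (HM0 0 z t ltac:(lra) hz ht) as hq.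
    apply Rabs_le_inv in hq. apply Rabs_le. pose proof (Rabs_le_inv _ _ hw) as hw'.
    split.
    - destruct (Rle_or_lt (- Bd) (Th w z t)) as [h|h]; auto. exfalso.
      assert (Th w z t < 0) by (unfold Bd in *; lra).
      pose proof (Q_inc (Th w z t) 0 z t H). pose proof (HTh w z t).
      unfold Bd in h. lra.
    - destruct (Rle_or_lt (Th w z t) Bd) as [h|h]; auto. exfalso.
      assert (0 < Th w z t) by (unfold Bd in *; lra).
      pose proof (Q_inc 0 (Th w z t) z t H). pose proof (HTh w z t).
      unfold Bd in h. lra. }
  destruct (cont3_posbound (fun x y z => - d2 x y z)) with (a1 := -Bd) (b1 := Bd) (a2 := 0) (b2 := 2) (a3 := 0) (b3 := T)
    as [ka [Hka Hk]].
  { intros x y z. specialize (cd2 x y z).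
    apply (continuous_opp (fun p : R * R * R => d2 (fst (fst p)) (snd (fst p)) (snd p))). exact cd2. }
  { intros; specialize (p2 x y z); lra. }
  destruct (cont3_bounded d3 cd3 (-Bd) Bd 0 2 0 T) as [La HLa].
  set (L := Rmax La 0).
  exists ((L + 1) / ka). split.
  { unfold L. apply Rdiv_lt_0_compat; auto. pose proof (Rmax_r La 0). lra. }
  intros n dt Hn Hdt Hndt w i t Hw Hi Ht Htdt.
  assert (HnR : 0 < INR n) by (apply lt_0_INR; lia).
  assert (HL0 : 0 <= L) by apply Rmax_r.
  set (z := zpos n i). set (z' := zpos n (S i)).
  assert (Hz: 0 <= z <= 2) by (apply zpos_bounds; lia).
  assert (Hz': 0 <= z' <= 2) by (apply zpos_bounds; lia).
  assert (Hzz: z' = z + / INR n) by (apply zpos_S; lia).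
  set (b := Th w z' t).
  assert (Hb: Rabs b <= Bd) by (apply HB; auto; lra).
  apply Rabs_le_inv in Hb.
  apply Th_lt.
  pose proof (HTh w z' t) as Ew. fold b in Ew.
  assert (Hlt : z < z') by (rewrite Hzz; pose proof (Rinv_0_lt_compat _ HnR); lra).
  destruct (MVT_cor2 (fun s => Q b s t) (fun s => d2 b s t) z z' Hlt) as [xi [Exi Hxi]].
  { intros c _. apply is_derive_Reals. apply h2. }
  assert (Kxi : ka <= - d2 b xi t) by (apply Hk; lra).
  assert (Htt : t < t + dt) by lra.
  destruct (MVT_cor2 (fun s => Q b z s) (fun s => d3 b z s) t (t + dt) Htt) as [eta [Eeta Heta]].
  { intros c _. apply is_derive_Reals. apply h3. }
  assert (Leta : Rabs (d3 b z eta) <= L) by (eapply Rle_trans; [apply HLa; lra| apply Rmax_l]).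
  apply Rabs_le_inv in Leta.
  assert (Hkey : L * dt < ka / INR n).
  { assert (INR n * dt * (L + 1) < ka).
    { assert (E1: 1 / ((L+1)/ka) = ka / (L+1)) by (field; lra).
      rewrite E1 in Hndt.
      apply (Rmult_lt_compat_r (L+1)) in Hndt; [|lra].
      replace (ka/(L+1)*(L+1)) with ka in Hndt by (field; lra). exact Hndt. }
    apply Rmult_lt_reg_r with (INR n); auto.
    replace (ka / INR n * INR n) with ka by (field; lra).
    nra. }
  assert (Ez : Q b z' t - Q b z t = d2 b xi t * / INR n) by (rewrite Exi, Hzz; ring).
  assert (E2 : Q b z (t+dt) - Q b z t = d3 b z eta * dt) by (rewrite Eeta; ring).
  assert (d2 b xi t * / INR n <= - (ka / INR n)).
  { unfold Rdiv. pose proof (Rinv_0_lt_compat _ HnR). nra. }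
  assert (- L * dt <= d3 b z eta * dt) by nra.
  lra.
Qed.
End QS.
Set Bullet Behavior "Strict Subproofs".
Ltac bd := repeat (match goal with
  | |- context[Nat.ltb ?a ?b] => destruct (Nat.ltb_spec a b)
  | |- context[Nat.eqb ?a ?b] => destruct (Nat.eqb_spec a b)
  end; simpl).

Definition cnt {A} (f : A -> bool) (l : list A) := length (filter f l).

Lemma cnt_mono {A} (f g : A -> bool) l :
  (forall x, In x l -> f x = true -> g x = true) -> (cnt f l <= cnt g l)%nat.
Proof.
  unfold cnt; induction l as [|a l IH]; simpl; intros H. lia.
  assert (IH' := IH (fun x Hx => H x (or_intror Hx))).
  destruct (f a) eqn:Ef; destruct (g a) eqn:Eg; simpl; try lia.
  rewrite (H a (or_introl eq_refl) Ef) in Eg; discriminate.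
Qed.

Lemma cnt_or {A} (f g : A -> bool) l :
  (cnt (fun x => f x || g x) l <= cnt f l + cnt g l)%nat.
Proof. unfold cnt; induction l as [|a l IH]; simpl. lia. destruct (f a), (g a); simpl; lia. Qed.

Lemma cnt_le1 {A} (f : A -> bool) l y : NoDup l ->
  (forall x, In x l -> f x = true -> x = y) -> (cnt f l <= 1)%nat.
Proof.
  unfold cnt. induction l as [|a l IH]; simpl; intros Hnd H. lia.
  inversion Hnd; subst. destruct (f a) eqn:E; simpl.
  - assert (a = y) by (apply H; auto). subst a.
    assert (filter f l = nil).
    { destruct (filter f l) as [|b r] eqn:E2; auto. exfalso.
      assert (In b (filter f l)) by (rewrite E2; left; auto).
      apply filter_In in H0. destruct H0 as [H0 H1].
      assert (b = y) by (apply H; auto). subst. contradiction. }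
    rewrite H0; simpl; lia.
  - apply IH; auto.
Qed.

Lemma cnt_zero {A} (f : A -> bool) l : (forall x, In x l -> f x = false) -> cnt f l = 0%nat.
Proof. unfold cnt; induction l as [|a l IH]; simpl; intros H. auto. rewrite (H a (or_introl eq_refl)). apply IH; auto. Qed.

Lemma Rltb_iff x y : Rltb x y = true <-> x < y.
Proof. unfold Rltb; destruct (Rlt_dec x y); split; intros; auto; try discriminate; contradiction. Qed.

Lemma Rleb_t x y : Rleb x y = true -> x <= y.
Proof. unfold Rleb; destruct (Rle_dec x y); intros; auto; discriminate. Qed.
Lemma Rleb_f x y : Rleb x y = false -> y < x.
Proof. unfold Rleb; destruct (Rle_dec x y); intros; try discriminate; lra. Qed.

Section Step.
Variable Th : R -> R -> R -> R.
Variable n : nat.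
Variable thM : nat -> R.
Variables tau tau0 : R.
Hypothesis Hn : (1 <= n)%nat.
Hypothesis mono_w : forall w1 w2 z t, w1 <= w2 -> Th w1 z t <= Th w2 z t.
Hypothesis mono_z : forall w z1 z2 t, z1 <= z2 -> Th w z1 t <= Th w z2 t.
Hypothesis margin : forall j i, (1 <= j <= n)%nat -> (1 <= i <= n)%nat ->
  Th (thM j) (zpos n i) tau < Th (thM j) (zpos n (S i)) tau0.

Definition th (c : config) i := thM (cp c i).
Definition wetP c i := cv c i < Th (th c i) (zpos n i) tau.
Definition condP c i0 i := (~ wetP c i /\ cv c i < Th (th c i0) (zpos n i) tau)
                            \/ (wetP c i /\ th c i < th c i0).
Definition eligP c m i0 := wetP c i0 /\ forall i, (i0 < i <= m)%nat -> condP c i0 i.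

Lemma zpos_mono i i' : (i <= i')%nat -> zpos n i <= zpos n i'.
Proof.
  intros H. unfold zpos. apply Rmult_le_compat_r.
  left; apply Rinv_0_lt_compat, lt_0_INR; lia. apply le_INR; lia.
Qed.

Lemma wetb_iff c i : wetb Th n thM tau c i = true <-> wetP c i.
Proof. unfold wetb, wetP, th. apply Rltb_iff. Qed.

Lemma condb_iff c i0 i : elig_condb Th n thM tau c i0 i = true <-> condP c i0 i.
Proof.
  unfold elig_condb, condP. rewrite orb_true_iff, !andb_true_iff, negb_true_iff, !Rltb_iff.
  rewrite <- wetb_iff. unfold th.
  destruct (wetb Th n thM tau c i); intuition discriminate.
Qed.

Lemma eligb_iff c m i0 : eligibleb Th n thM tau c m i0 = true <-> eligP c m i0.
Proof.
  unfold eligibleb, eligP. rewrite andb_true_iff, wetb_iff, forallb_forall.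
  split; intros [H1 H2]; split; auto; intros i Hi.
  - apply condb_iff, H2, in_seq. lia.
  - apply in_seq in Hi. apply condb_iff, H2. lia.
Qed.

Definition bestinv c m (acc : option nat) (L : list nat) :=
  match acc with
  | None => forall i, In i L -> eligibleb Th n thM tau c m i = false
  | Some b => In b L /\ eligibleb Th n thM tau c m b = true /\
       forall i, In i L -> eligibleb Th n thM tau c m i = true -> th c i <= th c b
  end.

Lemma fold_best c m l : forall acc L, bestinv c m acc L ->
  bestinv c m (fold_left
    (fun (best : option nat) (i : nat) =>
       if eligibleb Th n thM tau c m i then
         match best with
         | None => Some i
         | Some b => if Rleb (thM (cp c b)) (thM (cp c i)) then Some i else Some b
         end
       else best) l acc) (L ++ l).
Proof.
  induction l as [|x l IH]; intros acc L H; simpl.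
  - rewrite app_nil_r; auto.
  - replace (L ++ x :: l) with ((L ++ x :: nil) ++ l) by (rewrite <- app_assoc; auto).
    apply IH. destruct (eligibleb Th n thM tau c m x) eqn:Ex.
    + destruct acc as [b|]; simpl in H |- *.
      * destruct H as [Hb1 [Hb2 Hb3]].
        destruct (Rleb (thM (cp c b)) (thM (cp c x))) eqn:Er; simpl.
        -- apply Rleb_t in Er. split; [apply in_or_app; right; left; auto|split; auto].
           intros i Hi Ei. apply in_app_or in Hi. destruct Hi as [Hi|[Hi|[]]].
           ++ eapply Rle_trans; [apply Hb3; auto|]. exact Er.
           ++ subst; unfold th; lra.
        -- apply Rleb_f in Er. split; [apply in_or_app; left; auto|split; auto].
           intros i Hi Ei. apply in_app_or in Hi. destruct Hi as [Hi|[Hi|[]]].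
           ++ apply Hb3; auto.
           ++ subst; unfold th; lra.
      * split; [apply in_or_app; right; left; auto|split; auto].
        intros i Hi Ei. apply in_app_or in Hi. destruct Hi as [Hi|[Hi|[]]].
        ++ rewrite H in Ei; auto; discriminate.
        ++ subst; unfold th; lra.
    + destruct acc as [b|]; simpl in H |- *.
      * destruct H as [Hb1 [Hb2 Hb3]]. split; [apply in_or_app; left; auto|split; auto].
        intros i Hi Ei. apply in_app_or in Hi. destruct Hi as [Hi|[Hi|[]]].
        ++ apply Hb3; auto.
        ++ subst; rewrite Ex in Ei; discriminate.
      * intros i Hi. apply in_app_or in Hi. destruct Hi as [Hi|[Hi|[]]]; auto. subst; auto.
Qed.

Lemma select_best_spec c m :
  match select_best Th n thM tau c m with
  | None => forall i, (1 <= i <= m)%nat -> ~ eligP c m i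
  | Some b => (1 <= b <= m)%nat /\ eligP c m b /\
      forall i, (1 <= i <= m)%nat -> eligP c m i -> th c i <= th c b
  end.
Proof.
  assert (H := fold_best c m (seq 1 m) None nil ltac:(simpl; intros i [])).
  simpl in H. unfold select_best. destruct (fold_left _ _ _) as [b|]; simpl in H.
  - destruct H as [H1 [H2 H3]]. apply in_seq in H1. split; [lia|split].
    + apply eligb_iff; auto.
    + intros i Hi Ei. apply H3. apply in_seq; lia. apply eligb_iff; auto.
  - intros i Hi Ei. apply eligb_iff in Ei. rewrite H in Ei. discriminate. apply in_seq; lia.
Qed.

Notation mv c is m := (move Th n thM tau c is m).

Lemma mv_lt c is m i : (i < is)%nat -> cp (mv c is m) i = cp c i /\ cv (mv c is m) i = cv c i.
Proof. intros H. unfold move; simpl. bd; try lia; auto. Qed.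
Lemma mv_gt c is m i : (m < i)%nat -> cp (mv c is m) i = cp c i /\ cv (mv c is m) i = cv c i.
Proof. intros H. unfold move; simpl. bd; try lia; auto. Qed.
Lemma mv_m c is m : (is <= m)%nat -> cp (mv c is m) m = cp c is /\
   cv (mv c is m) m = Th (thM (cp c is)) (zpos n m) tau.
Proof. intros H. unfold move; simpl. bd; try lia; auto. Qed.
Lemma mv_mid c is m i : (is <= i < m)%nat -> cp (mv c is m) i = cp c (S i) /\ cv (mv c is m) i = cv c (S i).
Proof. intros H. unfold move; simpl. bd; try lia; auto. Qed.

Definition permP c := (forall i, (1 <= i <= n)%nat -> (1 <= cp c i <= n)%nat) /\
  (forall i i', (1 <= i <= n)%nat -> (1 <= i' <= n)%nat -> cp c i = cp c i' -> i = i') /\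
  (forall j, (1 <= j <= n)%nat -> exists i, (1 <= i <= n)%nat /\ cp c i = j).

Definition sg is m i := if i <? is then i else if m <? i then i else if i =? m then is else S i.
Definition pi is m p := if p <? is then p else if m <? p then p else if p =? is then m else (p - 1)%nat.

Lemma cp_mv c is m i : cp (mv c is m) i = cp c (sg is m i).
Proof. unfold move, sg; simpl. destruct (i <? is); destruct (m <? i); destruct (i =? m); reflexivity. Qed.

Lemma sg_pi is m p : (1 <= is <= m)%nat -> sg is m (pi is m p) = p.
Proof. intros H. unfold pi.
  destruct (Nat.ltb_spec p is); simpl; [unfold sg; bd; lia|].
  destruct (Nat.ltb_spec m p); simpl; [unfold sg; bd; lia|].
  destruct (Nat.eqb_spec p is); simpl; unfold sg; bd; lia. Qed.

Lemma perm_mv c is m : permP c -> (1 <= is <= m)%nat -> (m <= n)%nat -> permP (mv c is m).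
Proof.
  intros [P1 [P2 P3]] H1 H2. split; [|split].
  - intros i Hi. rewrite cp_mv. apply P1. unfold sg; bd; lia.
  - intros i i' Hi Hi'. rewrite !cp_mv. intros E. apply P2 in E; [|unfold sg; bd; lia|unfold sg; bd; lia].
    revert E. unfold sg. bd; lia.
  - intros j Hj. destruct (P3 j Hj) as [p [Hp Ep]]. exists (pi is m p). split.
    + unfold pi; bd; lia.
    + rewrite cp_mv, sg_pi; auto.
Qed.

Definition alphac c j := match find (fun i => cp c i =? j) (seq 1 n) with Some i => i | None => 0%nat end.

Lemma alphac_eq c j p : permP c -> (1 <= p <= n)%nat -> cp c p = j -> alphac c j = p.
Proof.
  intros [P1 [P2 P3]] Hp E. unfold alphac.
  destruct (find (fun i => cp c i =? j) (seq 1 n)) as [x|] eqn:F.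
  - apply find_some in F. destruct F as [F1 F2]. apply in_seq in F1. apply Nat.eqb_eq in F2.
    apply P2; try lia.
  - exfalso. assert (Hin : In p (seq 1 n)) by (apply in_seq; lia).
    pose proof (find_none _ _ F p Hin). simpl in H. apply Nat.eqb_neq in H. auto.
Qed.

Lemma alphac_range c j : permP c -> (1 <= j <= n)%nat ->
  (1 <= alphac c j <= n)%nat /\ cp c (alphac c j) = j.
Proof.
  intros HP Hj. destruct HP as [P1 [P2 P3]]. destruct (P3 j Hj) as [p [Hp Ep]].
  rewrite (alphac_eq c j p); auto. split; auto.
Qed.

Lemma alphac_mv c is m j : permP c -> (1 <= is <= m)%nat -> (m <= n)%nat -> (1 <= j <= n)%nat ->
  alphac (mv c is m) j = pi is m (alphac c j).
Proof.
  intros HP Hi Hm Hj. destruct (alphac_range c j HP Hj) as [R1 R2].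
  apply alphac_eq. apply perm_mv; auto. unfold pi; bd; lia.
  rewrite cp_mv, sg_pi; auto.
Qed.

Lemma leave_mv c is m j j0 : permP c -> (1 <= is <= m)%nat -> (m <= n)%nat -> (1 <= j <= n)%nat ->
  (1 <= j0 <= n)%nat ->
  (alphac c j < alphac c j0)%nat -> ~ (alphac (mv c is m) j < alphac (mv c is m) j0)%nat ->
  j = cp c is /\ (is < alphac c j0 <= m)%nat.
Proof.
  intros HP Hi Hm Hj Hj0 H1 H2. rewrite !alphac_mv in H2 by auto.
  destruct (alphac_range c j HP Hj) as [R1 R2].
  assert (E: alphac c j = is /\ (is < alphac c j0 <= m)%nat).
  { revert H2. unfold pi. bd; lia. }
  destruct E as [E1 E2]. split; auto. rewrite <- E1; auto.
Qed.


Definition sortedP c := forall i, (1 <= i < n)%nat -> cv c i <= cv c (S i).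
Definition nwafter c m := forall i, (m < i <= n)%nat -> Th (th c i) (zpos n i) tau <= cv c i.
Definition Bprop c m := (m < n)%nat -> forall i0, (1 <= i0 <= m)%nat -> eligP c m i0 ->
   Th (th c i0) (zpos n m) tau <= cv c (S m).
Definition region c m a := (1 <= a <= S m)%nat /\
  (forall i, (1 <= i < a)%nat -> Th (th c i) (zpos n i) tau0 <= cv c i) /\
  (forall i, (a <= i <= m)%nat -> Th (th c i) (zpos n (S i)) tau0 <= cv c i).
Definition NoBig c a b := forall i0, (1 <= i0 < a)%nat -> b < th c i0 -> wetP c i0 ->
   exists i, (i0 < i < a)%nat /\ ~ condP c i0 i.

Lemma th_range c i : permP c -> (1 <= i <= n)%nat -> exists j, (1 <= j <= n)%nat /\ th c i = thM j.
Proof. intros [P1 _] Hi. exists (cp c i). split; auto. Qed.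

Lemma shift_dry c m a i : permP c -> region c m a -> (a <= i <= m)%nat -> (m <= n)%nat -> ~ wetP c i.
Proof.
  intros HP [R1 [R2 R3]] Hi Hm Hw. unfold wetP in Hw.
  destruct (th_range c i HP ltac:(lia)) as [j [Hj Ej]].
  pose proof (R3 i Hi). rewrite Ej in *. pose proof (margin j i Hj ltac:(lia)). lra.
Qed.

Lemma mover_fresh c m a is : permP c -> region c m a -> eligP c m is -> (1 <= is <= m)%nat ->
  (m <= n)%nat -> (is < a)%nat.
Proof.
  intros HP HR [Hw _] Hi Hm. destruct (Nat.lt_ge_cases is a) as [h|h]; auto.
  exfalso. eapply shift_dry; eauto. lia.
Qed.

Lemma elig_below c m is i : eligP c m is -> (is < i <= m)%nat -> cv c i < Th (th c is) (zpos n i) tau.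
Proof.
  intros [_ H] Hi. destruct (H i Hi) as [[_ h]|[h1 h2]]; auto.
  unfold wetP in h1. eapply Rlt_le_trans; [exact h1|]. apply mono_w; lra.
Qed.

Lemma transfer c m is i0 : (i0 < is)%nat -> eligP c m is -> wetP c i0 -> th c is < th c i0 ->
  (forall i, (i0 < i < is)%nat -> condP c i0 i) -> eligP c m i0.
Proof.
  intros Hlt [Hw Hc] Hw0 Hth Hcond. split; auto. intros i Hi.
  destruct (Nat.lt_ge_cases i is) as [h|h]; [apply Hcond; lia|].
  destruct (Nat.eq_dec i is) as [e|e].
  - subst. right. split; auto.
  - destruct (Hc i ltac:(lia)) as [[h1 h2]|[h1 h2]].
    + left. split; auto. eapply Rlt_le_trans; [exact h2|]. apply mono_w; lra.
    + right. split; auto. lra.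
Qed.

Lemma cond_agree c c' i0 i : cp c' i0 = cp c i0 -> cp c' i = cp c i -> cv c' i = cv c i ->
  (condP c' i0 i <-> condP c i0 i).
Proof. intros E1 E2 E3. unfold condP, wetP, th. rewrite E1, E2, E3. tauto. Qed.

Lemma wet_agree c c' i : cp c' i = cp c i -> cv c' i = cv c i -> (wetP c' i <-> wetP c i).
Proof. intros E2 E3. unfold wetP, th. rewrite E2, E3. tauto. Qed.

Lemma nobig_new c m is : (1 <= is <= m)%nat -> eligP c m is ->
  (forall i, (1 <= i <= m)%nat -> eligP c m i -> th c i <= th c is) ->
  NoBig (mv c is m) is (th c is).
Proof.
  intros Hi He Hbest i0 Hi0 Hth Hw.
  destruct (mv_lt c is m i0 ltac:(lia)) as [E1 E2].
  apply NNPP. intro Hn0.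
  assert (Hall : forall i, (i0 < i < is)%nat -> condP c i0 i).
  { intros i Hi'. destruct (mv_lt c is m i ltac:(lia)) as [F1 F2].
    apply (cond_agree c (mv c is m) i0 i E1 F1 F2).
    apply NNPP. intro Hc. apply Hn0. exists i. split; auto. }
  assert (th (mv c is m) i0 = th c i0) by (unfold th; rewrite E1; auto).
  rewrite H in Hth.
  assert (eligP c m i0).
  { apply (transfer c m is i0); auto. lia. apply (wet_agree c (mv c is m) i0 E1 E2); auto. }
  pose proof (Hbest i0 ltac:(lia) H0). lra.
Qed.

Section Inv.
Variable c0 : config.
Variable j0 : nat.
Hypothesis Hj0 : (1 <= j0 <= n)%nat.

Definition below c j := (alphac c j <? alphac c j0).
Definition cntL c := cnt (fun j => below c0 j && negb (below c j)) (seq 1 n).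
Definition stateP c m a k := (cntL c <= k)%nat /\ (k <= 2)%nat /\
  ((1 <= k)%nat -> (alphac c j0 <= m)%nat -> exists b b1 py,
     (a <= py <= alphac c j0)%nat /\ NoBig c a b /\ b <= b1 /\
     (exists j, (1 <= j <= n)%nat /\ b1 = thM j) /\
     Th b1 (zpos n (py + (k - 1))) tau0 <= cv c py).
Definition Inv c m := permP c /\ sortedP c /\ nwafter c m /\ Bprop c m /\
  exists a k, region c m a /\ stateP c m a k.

Lemma stage_none c m : (1 <= m <= n)%nat -> select_best Th n thM tau c m = None ->
  Inv c m -> Inv c (m - 1).
Proof.
  intros Hm Hs [HP [HS [HW [HB [a [k [HR HSt]]]]]]].
  pose proof (select_best_spec c m) as Hsp. rewrite Hs in Hsp.
  assert (Hnw : ~ wetP c m).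
  { intro Hw. apply (Hsp m ltac:(lia)). split; auto. intros; lia. }
  split; auto. split; auto. split; [|split].
  - intros i Hi. destruct (Nat.eq_dec i m) as [e|e].
    + subst. unfold wetP in Hnw. lra.
    + apply HW. lia.
  - intros Hlt i0 Hi0 [Hw0 Hc0]. replace (S (m - 1)) with m by lia.
    destruct (Rle_or_lt (Th (th c i0) (zpos n (m - 1)) tau) (cv c m)) as [h|h]; auto.
    exfalso. apply (Hsp i0 ltac:(lia)). split; auto. intros i Hi.
    destruct (Nat.eq_dec i m) as [e|e]; [|apply Hc0; lia]. subst i.
    left. split; auto. eapply Rlt_le_trans; [exact h|]. apply mono_z, zpos_mono; lia.
  - exists (Nat.min a m), k. destruct HR as [R1 [R2 R3]]. destruct HSt as [S1 [S2 S3]].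
    split; [|split; [auto|split; [auto|]]].
    + destruct (Nat.le_gt_cases a m) as [h|h].
      * rewrite Nat.min_l by lia. split; [lia|split; auto]. intros i Hi; apply R3; lia.
      * rewrite Nat.min_r by lia. split; [lia|split]. intros i Hi; apply R2; lia. intros; lia.
    + intros Hk Hp0. destruct (S3 Hk ltac:(lia)) as [b [b1 [py [P1 P2]]]].
      rewrite Nat.min_l by lia. exists b, b1, py. split; auto.
Qed.

Lemma cntL_step c c' : (forall j, (1 <= j <= n)%nat -> below c j = true -> below c' j = false -> False) ->
  (cntL c' <= cntL c)%nat.
Proof.
  intros H. unfold cntL. apply cnt_mono. intros j Hj E.
  apply in_seq in Hj. apply andb_true_iff in E. destruct E as [E1 E2].
  rewrite E1; simpl. destruct (below c j) eqn:Eb; auto.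
  exfalso. apply (H j ltac:(lia) Eb). apply negb_true_iff in E2; auto.
Qed.

Lemma cntL_step1 c c' y : (forall j, (1 <= j <= n)%nat -> below c j = true -> below c' j = false -> j = y) ->
  (cntL c' <= cntL c + 1)%nat.
Proof.
  intros H. unfold cntL.
  eapply Nat.le_trans.
  - apply (cnt_mono _ (fun j => (below c0 j && negb (below c j)) || (below c j && negb (below c' j)))).
    intros j _ E. apply andb_true_iff in E. destruct E as [E1 E2]. rewrite E1, E2; simpl.
    destruct (below c j); auto.
  - eapply Nat.le_trans; [apply cnt_or|]. apply Nat.add_le_mono_l.
    apply (cnt_le1 _ _ y (seq_NoDup n 1)). intros j Hj E. apply in_seq in Hj.
    apply andb_true_iff in E. destruct E as [E1 E2]. apply negb_true_iff in E2. apply H; auto. lia.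
Qed.

Lemma stage_some c m is : (1 <= m <= n)%nat -> select_best Th n thM tau c m = Some is ->
  Inv c m -> Inv (mv c is m) (m - 1).
Proof.
  intros Hm Hs [HP [HS [HW [HB [a [k [HR HSt]]]]]]].
  pose proof (select_best_spec c m) as Hsp. rewrite Hs in Hsp.
  destruct Hsp as [Hi [He Hbest]].
  assert (HP' : permP (mv c is m)) by (apply perm_mv; auto; lia).
  assert (Hfr : (is < a)%nat) by (apply (mover_fresh c m a is HP HR He); lia).
  destruct HR as [R1 [R2 R3]].
  assert (Hthm : th (mv c is m) m = th c is) by (unfold th; rewrite (proj1 (mv_m c is m ltac:(lia))); auto).
  assert (Hcvm : cv (mv c is m) m = Th (th c is) (zpos n m) tau) by (rewrite (proj2 (mv_m c is m ltac:(lia))); auto).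
  assert (Hcm : cv c m < Th (th c is) (zpos n m) tau).
  { destruct (Nat.eq_dec is m) as [e|e].
    - destruct He as [Hw _]. unfold wetP in Hw. rewrite <- e. exact Hw.
    - apply (elig_below c m is m He). lia. }
  assert (HR' : region (mv c is m) (m - 1) is).
  { split; [lia|split].
    - intros i Hi'. destruct (mv_lt c is m i ltac:(lia)) as [E1 E2]. unfold th. rewrite E1, E2. apply R2. lia.
    - intros i Hi'. destruct (mv_mid c is m i ltac:(lia)) as [E1 E2]. unfold th. rewrite E1, E2.
      destruct (Nat.lt_ge_cases (S i) a) as [h|h].
      + apply R2. lia.
      + eapply Rle_trans; [|apply R3; lia]. apply mono_z, zpos_mono. lia. }
  assert (HA : forall i, (is <= i <= m)%nat -> cv c i <= cv (mv c is m) i).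
  { intros i Hi'. destruct (Nat.eq_dec i m) as [e|e].
    - subst i. rewrite Hcvm. lra.
    - destruct (mv_mid c is m i ltac:(lia)) as [_ E2]. rewrite E2. apply HS. lia. }
  split; [auto|split; [|split; [|split]]].
  -
    intros i Hi'.
    destruct (Nat.lt_ge_cases (S i) is) as [h1|h1].
    { destruct (mv_lt c is m i ltac:(lia)) as [_ E1]. destruct (mv_lt c is m (S i) h1) as [_ E2].
      rewrite E1, E2. apply HS. lia. }
    destruct (Nat.eq_dec (S i) is) as [h2|h2].
    { destruct (mv_lt c is m i ltac:(lia)) as [_ E1]. rewrite E1.
      assert (cv c i <= cv c (S i)) by (apply HS; lia).
      assert (cv c (S i) <= cv (mv c is m) (S i)) by (apply HA; lia). lra. }
    destruct (Nat.lt_ge_cases (S i) m) as [h3|h3].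
    { destruct (mv_mid c is m i ltac:(lia)) as [_ E1]. destruct (mv_mid c is m (S i) ltac:(lia)) as [_ E2].
      rewrite E1, E2. apply HS. lia. }
    destruct (Nat.eq_dec (S i) m) as [h4|h4].
    { destruct (mv_mid c is m i ltac:(lia)) as [_ E1]. rewrite E1, h4, Hcvm. lra. }
    destruct (Nat.eq_dec i m) as [h5|h5].
    { subst i. rewrite Hcvm. destruct (mv_gt c is m (S m) ltac:(lia)) as [_ E2]. rewrite E2.
      apply HB; auto; lia. }
    destruct (mv_gt c is m i ltac:(lia)) as [_ E1]. destruct (mv_gt c is m (S i) ltac:(lia)) as [_ E2].
    rewrite E1, E2. apply HS. lia.
  -
    intros i Hi'. destruct (Nat.eq_dec i m) as [e|e].
    + subst i. rewrite Hthm, Hcvm. lra.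
    + destruct (mv_gt c is m i ltac:(lia)) as [E1 E2]. unfold th. rewrite E1, E2. apply HW. lia.
  -
    intros Hlt i0 Hi0 He0. replace (S (m - 1)) with m by lia. rewrite Hcvm.
    assert (H : th (mv c is m) i0 <= th c is).
    { destruct (Rle_or_lt (th (mv c is m) i0) (th c is)) as [h|h]; auto. exfalso.
      destruct (Nat.lt_ge_cases i0 is) as [h1|h1].
      - destruct (mv_lt c is m i0 h1) as [E1 E2].
        destruct He0 as [Hw0 Hc0].
        assert (Hth0 : th (mv c is m) i0 = th c i0) by (unfold th; rewrite E1; auto). rewrite Hth0 in h.
        assert (H0 : eligP c m i0).
        { apply (transfer c m is i0); auto.
          - apply (wet_agree c (mv c is m) i0 E1 E2); auto.
          - intros i Hi'. destruct (mv_lt c is m i ltac:(lia)) as [F1 F2].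
            apply (cond_agree c (mv c is m) i0 i E1 F1 F2). apply Hc0. lia. }
        pose proof (Hbest i0 ltac:(lia) H0). lra.
      - apply (shift_dry (mv c is m) (m - 1) is i0 HP' HR'); [lia|lia|]. destruct He0; auto. }
    eapply Rle_trans; [apply mono_w; exact H|]. apply mono_z, zpos_mono. lia.
  -
    exists is.
    set (p0 := alphac c j0). destruct (alphac_range c j0 HP Hj0) as [Rp0 Ep0]. fold p0 in Rp0, Ep0.
    assert (Hp0' : alphac (mv c is m) j0 = pi is m p0) by (apply alphac_mv; auto; lia).
    destruct HSt as [S1 [S2 S3]].
    destruct (classic ((is < p0)%nat /\ (p0 <= m)%nat)) as [Hcr|Hncr].
    +
      assert (Hcnt : (cntL (mv c is m) <= cntL c + 1)%nat).
      { apply (cntL_step1 c (mv c is m) (cp c is)). intros j Hj E1 E2.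
        unfold below in E1, E2. apply Nat.ltb_lt in E1. apply Nat.ltb_ge in E2.
        destruct (leave_mv c is m j j0 HP ltac:(lia) ltac:(lia) Hj Hj0 E1 ltac:(lia)) as [A _]. auto. }
      assert (Hp0'' : alphac (mv c is m) j0 = (p0 - 1)%nat) by (rewrite Hp0'; unfold pi; bd; lia).
      assert (Hlt_m : (is < m)%nat) by lia.
      destruct k as [|[|[|k]]].
      * exists 1%nat. split; [exact HR'|]. split; [lia|split; [lia|]].
        intros _ _. exists (th c is), (th c is), is. rewrite Hp0''. split; [lia|].
        split; [apply nobig_new; auto|]. split; [lra|]. split; [apply th_range; auto; lia|].
        replace (is + (1 - 1))%nat with is by lia.
        destruct (mv_mid c is m is ltac:(lia)) as [_ E2]. rewrite E2.
        eapply Rle_trans; [apply R2; lia|]. apply HS; lia.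
      * destruct (S3 ltac:(lia) ltac:(lia)) as [b [b1 [py [Q1 [Q2 [Q3 [Q4 Q5]]]]]]].
        assert (Hb : th c is <= b).
        { destruct (Rle_or_lt (th c is) b) as [h|h]; auto. exfalso.
          destruct (Q2 is ltac:(lia) h (proj1 He)) as [i [Hi1 Hi2]]. apply Hi2. apply (proj2 He). lia. }
        exists 2%nat. split; [exact HR'|]. split; [lia|split; [lia|]]. intros _ _.
        exists (th c is), b1, (py - 1)%nat. rewrite Hp0''. split; [lia|].
        split; [apply nobig_new; auto|]. split; [lra|]. split; auto.
        replace (py - 1 + (2 - 1))%nat with py by lia.
        destruct (mv_mid c is m (py - 1) ltac:(lia)) as [_ E2]. rewrite E2. replace (S (py - 1)) with py by lia.
        replace (py + (1 - 1))%nat with py in Q5 by lia. exact Q5.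
      * exfalso. destruct (S3 ltac:(lia) ltac:(lia)) as [b [b1 [py [Q1 [Q2 [Q3 [[j [Hj Ej]] Q5]]]]]]].
        assert (Hb : th c is <= b).
        { destruct (Rle_or_lt (th c is) b) as [h|h]; auto. exfalso.
          destruct (Q2 is ltac:(lia) h (proj1 He)) as [i [Hi1 Hi2]]. apply Hi2. apply (proj2 He). lia. }
        destruct (proj2 He py ltac:(lia)) as [[h1 h2]|[h1 h2]].
        -- replace (py + (2 - 1))%nat with (S py) in Q5 by lia. subst b1.
           pose proof (margin j py Hj ltac:(lia)).
           assert (Th (th c is) (zpos n py) tau <= Th (thM j) (zpos n py) tau) by (apply mono_w; lra). lra.
        -- apply (shift_dry c m a py HP (conj R1 (conj R2 R3))); auto; lia.
      * lia.
    +
      exists k. split; [exact HR'|]. split.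
      { eapply Nat.le_trans; [|exact S1]. apply cntL_step. intros j Hj E1 E2.
        unfold below in E1, E2. apply Nat.ltb_lt in E1. apply Nat.ltb_ge in E2.
        destruct (leave_mv c is m j j0 HP ltac:(lia) ltac:(lia) Hj Hj0 E1 ltac:(lia)) as [_ B]. apply Hncr. auto. }
      split; auto. intros Hk Hp. exfalso.
      destruct (Nat.le_gt_cases p0 m) as [h|h].
      * destruct (S3 Hk h) as [b [b1 [py [Q1 _]]]]. apply Hncr. split; lia.
      * rewrite Hp0' in Hp. unfold pi in Hp. revert Hp. bd; lia.
Qed.

Lemma stage_inv c m : (1 <= m <= n)%nat -> Inv c m -> Inv (stage Th n thM tau c m) (m - 1).
Proof.
  intros Hm HI. unfold stage. destruct (select_best Th n thM tau c m) as [is|] eqn:Hs.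
  - apply stage_some; auto.
  - apply stage_none; auto.
Qed.

Lemma fold_inv : forall m c, (m <= n)%nat -> Inv c m ->
  Inv (fold_left (stage Th n thM tau) (rev (seq 1 m)) c) 0.
Proof.
  induction m as [|m IH]; intros c Hm HI; [simpl; auto|].
  rewrite seq_S, rev_app_distr. simpl.
  apply IH; [lia|]. replace m with (S m - 1)%nat at 2 by lia. apply stage_inv; auto. lia.
Qed.

Lemma step_main : permP c0 -> sortedP c0 ->
  (forall i, (1 <= i <= n)%nat -> Th (th c0 i) (zpos n i) tau0 <= cv c0 i) ->
  let c1 := time_step Th n thM tau c0 in
  permP c1 /\ sortedP c1 /\ (forall i, (1 <= i <= n)%nat -> Th (th c1 i) (zpos n i) tau <= cv c1 i) /\
  (cntL c1 <= 2)%nat.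
Proof.
  intros HP HS HN c1.
  assert (HI : Inv c0 n).
  { split; [exact HP|]. split; [exact HS|]. split; [unfold nwafter; intros i Hi; lia|]. split; [unfold Bprop; intros; lia|].
    exists (S n), 0%nat. split.
    - split; [lia|split]. intros i Hi; apply HN; lia. intros; lia.
    - split; [|split; [lia|intros; lia]].
      unfold cntL. rewrite cnt_zero; auto. intros j _. destruct (below c0 j); auto. }
  destruct (fold_inv n c0 (le_n n) HI) as [P1 [P2 [P3 [_ [a [k [_ [S1 [S2 _]]]]]]]]].
  unfold c1, time_step. split; auto. split; auto. split.
  - intros i Hi. apply P3. lia.
  - lia.
Qed.

End Inv.
End Step.

Lemma maxabs_ge n (f : nat -> R) j : (1 <= j <= n)%nat -> Rabs (f j) <= maxabs n f.
Proof.
  intros Hj. unfold maxabs. assert (Hin : In j (seq 1 n)) by (apply in_seq; lia).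
  generalize (seq 1 n) Hin. clear. intros l Hin. induction l as [|a l IH]; simpl in *. contradiction.
  destruct Hin as [<-|Hin]. apply Rmax_l. eapply Rle_trans; [apply IH; auto|apply Rmax_r].
Qed.

Lemma cnt_split {A} (f g h : A -> bool) l :
  (cnt (fun j => f j && negb (h j)) l <= cnt (fun j => f j && negb (g j)) l + cnt (fun j => g j && negb (h j)) l)%nat.
Proof.
  eapply Nat.le_trans; [|apply cnt_or]. apply cnt_mono. intros x _ E.
  apply andb_true_iff in E. destruct E as [E1 E2]. rewrite E1, E2. destruct (g x); auto.
Qed.

Theorem lemma4p7 :
  forall (Qsat Theta : R -> R -> R -> R),
    smooth3 Qsat ->
    (forall th z t, Derive (fun s => Qsat s z t) th > 0) ->
    (forall th z t, Derive (fun s => Qsat th s t) z < 0) ->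
    (forall w z t, Theta w z t + Qsat (Theta w z t) z t = w) ->
    (forall w z t, Derive (fun s => Theta s z t) w > 0) ->
    (forall w z t, Derive (fun s => Theta w s t) z > 0) ->
  forall (T : R), T > 0 ->
  forall (Mp : R),
  exists C4 : R, C4 > 0 /\
    forall (n : nat) (dt : R) (theta0 q0 : nat -> R),
      (1 <= n)%nat -> dt > 0 ->
      (forall j, (1 <= j < n)%nat -> theta0 j <= theta0 (S j)) ->
      (forall j, (1 <= j <= n)%nat -> q0 j <= Qsat (theta0 j) (INR j / INR n) 0) ->
      maxabs n theta0 + maxabs n q0 = Mp ->
      forall (j0 k l : nat),
        (1 <= j0 <= n)%nat ->
        (k < l)%nat ->
        INR l <= T / dt ->
        INR n * dt < 1 / C4 ->
        (card_J Theta n dt theta0 q0 j0 k l <= 2 * (l - k))%nat.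
Proof.
  intros Qsat Theta HQ HQth HQz HTh _ _ T HT Mp.
  destruct (margin_exists Qsat Theta HQ HQth HQz HTh Mp T HT) as [C4 [HC4 Hmarg]].
  exists C4. split; auto.
  intros n dt theta0 q0 Hn Hdt Hmono Hq HM j0 k l Hj0 Hkl HlT Hndt.
  pose proof (Th_mono_w Qsat Theta HQ HQth HQz HTh) as mono_w.
  pose proof (Th_mono_z Qsat Theta HQ HQth HQz HTh) as mono_z.
  set (thM := fun j => theta0 j + q0 j).
  assert (Hthb : forall j, (1 <= j <= n)%nat -> Rabs (thM j) <= Mp).
  { intros j Hj. unfold thM. rewrite <- HM. eapply Rle_trans; [apply Rabs_triang|].
    pose proof (maxabs_ge n theta0 j Hj). pose proof (maxabs_ge n q0 j Hj). lra. }
  set (cfg := fun s => config_at Theta n dt theta0 q0 s).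
  assert (HlT' : INR l * dt <= T).
  { apply Rmult_le_compat_r with (r := dt) in HlT; [|lra].
    replace (T / dt * dt) with T in HlT by (field; lra). exact HlT. }
  assert (Hstepm : forall s, (S s <= l)%nat -> forall j i, (1 <= j <= n)%nat -> (1 <= i <= n)%nat ->
     Theta (thM j) (zpos n i) (INR (S s) * dt) < Theta (thM j) (zpos n (S i)) (INR s * dt)).
  { intros s Hs j i Hj Hi. rewrite S_INR.
    replace ((INR s + 1) * dt) with (INR s * dt + dt) by ring.
    apply Hmarg; auto.
    - apply Rmult_le_pos; [apply pos_INR|lra].
    - replace (INR s * dt + dt) with (INR (S s) * dt) by (rewrite S_INR; ring).
      eapply Rle_trans; [|exact HlT']. apply Rmult_le_compat_r; [lra|]. apply le_INR; auto. }
  assert (Hcfg : forall s, (s <= l)%nat ->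
     permP n (cfg s) /\ sortedP n (cfg s) /\
     (forall i, (1 <= i <= n)%nat -> Theta (th thM (cfg s) i) (zpos n i) (INR s * dt) <= cv (cfg s) i)).
  { induction s as [|s IH]; intros Hs.
    - simpl. split; [|split].
      + split; [|split]; simpl; auto. intros j Hj; exists j; auto.
      + intros i Hi. simpl. apply Hmono. auto.
      + intros i Hi. simpl. rewrite Rmult_0_l. unfold th, thM. simpl.
        apply (Th_le Qsat Theta HQ HQth HQz HTh). pose proof (Hq i Hi). unfold zpos. lra.
    - destruct (IH ltac:(lia)) as [P1 [P2 P3]].
      pose proof (step_main Theta n thM (INR (S s) * dt) (INR s * dt) Hn mono_w mono_z
                   (Hstepm s Hs) (cfg s) j0 Hj0 P1 P2 P3) as St.
      simpl in St. destruct St as [A1 [A2 [A3 _]]]. split; auto. }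
  assert (Hcnt : forall s, (S s <= l)%nat -> (cntL n (cfg s) j0 (cfg (S s)) <= 2)%nat).
  { intros s Hs. destruct (Hcfg s ltac:(lia)) as [P1 [P2 P3]].
    pose proof (step_main Theta n thM (INR (S s) * dt) (INR s * dt) Hn mono_w mono_z
                   (Hstepm s Hs) (cfg s) j0 Hj0 P1 P2 P3) as St.
    simpl in St. destruct St as [_ [_ [_ A4]]]. exact A4. }
  assert (Hacc : forall d, (k + d <= l)%nat ->
    (cnt (fun j => below n j0 (cfg k) j && negb (below n j0 (cfg (k + d)%nat) j)) (seq 1 n) <= 2 * d)%nat).
  { induction d as [|d IH]; intros Hd.
    - rewrite Nat.add_0_r. rewrite cnt_zero; [lia|]. intros j _. destruct (below n j0 (cfg k) j); auto.
    - eapply Nat.le_trans; [apply (cnt_split _ (below n j0 (cfg (k + d)%nat)))|].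
      pose proof (IH ltac:(lia)). pose proof (Hcnt (k + d)%nat ltac:(lia)).
      unfold cntL in H0. replace (k + S d)%nat with (S (k + d)) by lia. lia. }
  eapply Nat.le_trans; [|apply (Hacc (l - k)%nat); lia].
  replace (k + (l - k))%nat with l by lia.
  unfold card_J. apply cnt_mono. intros j _ E.
  apply andb_true_iff in E. destruct E as [E1 E2].
  unfold below. change (alpha Theta n dt theta0 q0 k j) with (alphac n (cfg k) j) in E1.
  change (alpha Theta n dt theta0 q0 k j0) with (alphac n (cfg k) j0) in E1.
  change (alpha Theta n dt theta0 q0 l j0) with (alphac n (cfg l) j0) in E2.
  change (alpha Theta n dt theta0 q0 l j) with (alphac n (cfg l) j) in E2.
  rewrite E1. simpl. apply Nat.ltb_lt in E2. apply negb_true_iff, Nat.ltb_ge. lia.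
Qed.
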